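(* Let $R$ be a commutative ring with identity and $M$ a finitely generated multiplication $R$-module. Then $$\sum_{a\in\sqrt{(0:M)}} a\Gamma_a(M)=\beta(M).$$
   Context: $M$ is a multiplication module if every submodule $N$ of $M$ is of the form $IM$ for some ideal $I$ of $R$. $(0:M)=\{r\in R\mid rM=0\}$ and $\sqrt{(0:M)}$ is its radical. For $a\in R$, $a\Gamma_{a}(M)=\{am \mid m\in M,\ a^{k}m=0 \text{ for some } k\in\mathbb{Z}^{+}\}$. A proper submodule $N$ of $M$ is prime if for all $r\in R$, $m\in M$, $rm\in N$ implies $m\in N$ or $rM\subseteq N$; $\beta(M)$ is the intersection of all prime submodules of $M$. *)

(* Defs.v *)
From HB Require Import structures.
From mathcomp Require Import all_boot all_order all_algebra.
Set Implicit Arguments. Unset Strict Implicit. Unset Printing Implicit Defensive.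
Import GRing.Theory.
Local Open Scope ring_scope.

Definition is_ideal (R : comPzRingType) (I : R -> Prop) : Prop :=
  [/\ I 0, (forall a b, I a -> I b -> I (a + b)) & (forall r a, I a -> I (r * a))].

Definition is_submodule (R : comPzRingType) (M : lmodType R) (N : M -> Prop) : Prop :=
  [/\ N 0, (forall x y, N x -> N y -> N (x + y)) & (forall (r : R) x, N x -> N (r *: x))].

Definition ideal_mul (R : comPzRingType) (M : lmodType R) (I : R -> Prop) (x : M) : Prop :=
  exists s : seq (R * M),
    (forall p, p \in s -> I p.1) /\ x = \sum_(p <- s) p.1 *: p.2.

Definition multiplication_module (R : comPzRingType) (M : lmodType R) : Prop :=
  forall N : M -> Prop, is_submodule N ->
    exists I : R -> Prop, is_ideal I /\ forall x, N x <-> ideal_mul I x.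

Definition fin_gen (R : comPzRingType) (M : lmodType R) : Prop :=
  exists s : seq M, forall x : M,
    exists r : 'I_(size s) -> R, x = \sum_(i < size s) r i *: s`_i.

Definition ann (R : comPzRingType) (M : lmodType R) (r : R) : Prop :=
  forall m : M, r *: m = 0.

Definition rad_ann (R : comPzRingType) (M : lmodType R) (a : R) : Prop :=
  exists n : nat, ann M (a ^+ n).

Definition Gamma (R : comPzRingType) (M : lmodType R) (a : R) (m : M) : Prop :=
  exists k : nat, (0 < k)%N /\ a ^+ k *: m = 0.

Definition aGamma (R : comPzRingType) (M : lmodType R) (a : R) (x : M) : Prop :=
  exists m : M, Gamma a m /\ x = a *: m.

Definition sum_aGamma (R : comPzRingType) (M : lmodType R) (x : M) : Prop :=
  exists s : seq (R * M),
    (forall p, p \in s -> rad_ann M p.1 /\ aGamma p.1 p.2) /\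
    x = \sum_(p <- s) p.2.

Definition prime_submodule (R : comPzRingType) (M : lmodType R) (N : M -> Prop) : Prop :=
  [/\ is_submodule N, (exists m, ~ N m) &
      (forall (r : R) (m : M), N (r *: m) -> N m \/ (forall m' : M, N (r *: m')))].

(* beta(M): intersection of all prime submodules (M itself if there are none). *)
Definition beta (R : comPzRingType) (M : lmodType R) (x : M) : Prop :=
  forall N : M -> Prop, prime_submodule N -> N x.

(* Main.v *)
Require Import Defs.
From HB Require Import structures.
From mathcomp Require Import all_boot all_order all_algebra.
From Stdlib Require Import Classical.
Set Implicit Arguments. Unset Strict Implicit. Unset Printing Implicit Defensive.
Import GRing.Theory.
Local Open Scope ring_scope.

Definition prime_ideal (R : comPzRingType) (p : R -> Prop) :=
  [/\ is_ideal p, ~ p 1 & forall a b, p (a * b) -> p a \/ p b].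

Fixpoint pspan (R : comPzRingType) (M : lmodType R) (p : R -> Prop) (l : seq M) (y : M) : Prop :=
  match l with
  | [::] => y = 0
  | m :: l' => exists c, p c /\ pspan p l' (y - c *: m)
  end.

Lemma pspan0 (R : comPzRingType) (M : lmodType R) (p : R -> Prop) (l : seq M) :
  is_ideal p -> pspan p l 0.
Proof.
case=> p0 _ _; elim: l => [|m l IH] //=.
by exists 0; split=> //; rewrite scale0r subr0.
Qed.

Lemma pspanD (R : comPzRingType) (M : lmodType R) (p : R -> Prop) (l : seq M) y z :
  is_ideal p -> pspan p l y -> pspan p l z -> pspan p l (y + z).
Proof.
move=> [p0 pD pM]; elim: l y z => [|m l IH] y z /=; first by move=> -> ->; rewrite addr0.
move=> [c [pc Hy]] [d [pd Hz]]; exists (c + d); split; first exact: pD.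
have -> : y + z - (c + d) *: m = (y - c *: m) + (z - d *: m).
  by rewrite scalerDl opprD !addrA [y + z + _]addrAC [_ - c *: m + z]addrAC.
exact: IH.
Qed.

Lemma pspanZ (R : comPzRingType) (M : lmodType R) (p : R -> Prop) (l : seq M) y (r : R) :
  is_ideal p -> pspan p l y -> pspan p l (r *: y).
Proof.
move=> [p0 pD pM]; elim: l y => [|m l IH] y /=; first by move=> ->; rewrite scaler0.
move=> [c [pc Hy]]; exists (r * c); split; first exact: pM.
by rewrite -scalerA -scalerBr; exact: IH.
Qed.

Lemma pspan_gen (R : comPzRingType) (M : lmodType R) (p : R -> Prop) (l : seq M) (k : nat) c :
  is_ideal p -> p c -> pspan p l (c *: l`_k).
Proof.
move=> Ip pc; elim: l k => [|m l IH] k /=; first by rewrite nth_nil scaler0.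
case: k => [|k] /=.
  by exists c; split=> //; rewrite subrr; exact: pspan0.
by exists 0; split; [case: Ip | rewrite scale0r subr0; exact: IH].
Qed.

Lemma pspan_kill (R : comPzRingType) (M : lmodType R) (p : R -> Prop) (l : seq M) y (t : R) :
  (forall m, m \in l -> t *: m = 0) -> pspan p l y -> t *: y = 0.
Proof.
elim: l y => [|m l IH] y /=; first by move=> _ ->; rewrite scaler0.
move=> Ht [c [_ Hy]].
have -> : y = (y - c *: m) + c *: m by rewrite subrK.
rewrite scalerDr IH; last 2 first.
- by move=> m' Hm'; apply: Ht; rewrite inE Hm' orbT.
- exact: Hy.
by rewrite scalerA mulrC -scalerA Ht ?mem_head // scaler0 add0r.
Qed.

Lemma nak (R : comPzRingType) (M : lmodType R) (p : R -> Prop) (l : seq M) (s : R) :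
  prime_ideal p -> ~ p s -> (forall m, m \in l -> pspan p l (s *: m)) ->
  exists t, ~ p t /\ forall m, m \in l -> t *: m = 0.
Proof.
move=> [Ip p1 pp]; have [p0 pD pM] := Ip.
have pN : forall a, p a -> p (- a).
  by move=> a pa; rewrite -mulN1r; apply: pM.
elim: l s => [|m l IH] s ns H; first by exists 1; split.
have [c [pc Hm]] := H m (mem_head _ _).
set u := s - c.
have nu : ~ p u.
  move=> pu; apply: ns; have -> : s = u + c by rewrite subrK.
  exact: pD.
have Hum : pspan p l (u *: m) by rewrite scalerBl.
have nus : ~ p (u * s) by case/pp.
have [|t' [nt' Ht']] := IH (u * s) nus.
  move=> m' Hm'; have : m' \in m :: l by rewrite inE Hm' orbT.
  move=> /(H m') [d [pd Hd]].
  have -> : (u * s) *: m' = u *: (s *: m' - d *: m) + d *: (u *: m).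
    by rewrite scalerBr !scalerA mulrC [d * u]mulrC subrK.
  by apply: pspanD => //; apply: pspanZ.
exists (t' * u); split.
  by move=> /pp [].

move=> m'; rewrite in_cons => /orP [/eqP -> | Hm'].
  by rewrite -scalerA; exact: (pspan_kill Ht' Hum).
by rewrite mulrC -scalerA Ht' // scaler0.
Qed.

Lemma ideal_mul_mono (R : comPzRingType) (M : lmodType R) (I J : R -> Prop) (y : M) :
  (forall a, I a -> J a) -> ideal_mul I y -> ideal_mul J y.
Proof. by move=> IJ [s [Hs ->]]; exists s; split=> // q /Hs /IJ. Qed.

Lemma ideal_mul1 (R : comPzRingType) (M : lmodType R) (I : R -> Prop) (a : R) (m : M) :
  I a -> ideal_mul I (a *: m).
Proof.
move=> Ia; exists [:: (a, m)]; split; last by rewrite big_seq1.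
by move=> q; rewrite inE => /eqP ->.
Qed.

Lemma ideal_mul_sub (R : comPzRingType) (M : lmodType R) (I : R -> Prop) :
  is_ideal I -> is_submodule (ideal_mul I (M := M)).
Proof.
move=> [I0 ID IM]; split.
- by exists [::]; split=> //; rewrite big_nil.
- move=> x y [s [Hs ->]] [t [Ht ->]]; exists (s ++ t); split; last by rewrite big_cat.
  by move=> q; rewrite mem_cat => /orP[/Hs|/Ht].
- move=> r x [s [Hs ->]]; exists [seq (r * q.1, q.2) | q <- s]; split.
    by move=> q /mapP [q' /Hs Hq' ->] /=; apply: IM.
  by rewrite big_map scaler_sumr; apply: eq_bigr => q _; rewrite scalerA.
Qed.

Lemma ideal_mul_pspan (R : comPzRingType) (M : lmodType R) (p : R -> Prop) (s : seq M) (y : M) :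
  is_ideal p ->
  (forall x : M, exists r : 'I_(size s) -> R, x = \sum_(i < size s) r i *: s`_i) ->
  ideal_mul p y -> pspan p s y.
Proof.
move=> Ip gen [sq [Hsq ->]]; have [p0 pD pM] := Ip.
rewrite big_seq; apply: (big_ind (pspan p s)); first exact: pspan0.
  by move=> a b; apply: pspanD.
move=> q /Hsq pq; have [r ->] := gen q.2.
rewrite scaler_sumr; apply: (big_ind (pspan p s)); first exact: pspan0.
  by move=> a b; apply: pspanD.
move=> i _; rewrite scalerA; apply: pspan_gen => //.
by rewrite mulrC; apply: pM.
Qed.

Lemma keyL (R : comPzRingType) (M : lmodType R) (p : R -> Prop) (a : R) :
  fin_gen M -> prime_ideal p -> (forall r, ann M r -> p r) ->
  (forall m : M, ideal_mul p (a *: m)) -> p a.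
Proof.
move=> [s gen] pr pA Ha; have [Ip _ _] := pr.
apply: NNPP => na.
have [|t [nt Ht]] := nak pr na (l := s).
  by move=> m _; apply: ideal_mul_pspan.
apply: nt; apply: pA => m; have [r ->] := gen m.
rewrite scaler_sumr big1 // => i _.
by rewrite scalerA mulrC -scalerA Ht ?scaler0 // mem_nth.
Qed.
From mathcomp Require Import classical_sets.

Lemma exists_prime (R : comPzRingType) (A0 : R -> Prop) (j : R) :
  is_ideal A0 -> (forall n, ~ A0 (j ^+ n)) ->
  exists p, prime_ideal p /\ (forall r, A0 r -> p r) /\ ~ p j.
Proof.
move=> IA0 nA0.
pose Q := fun X : R -> Prop =>
  is_ideal X /\ (forall r, A0 r -> X r) /\ forall n, ~ X (j ^+ n).
pose P := fun X : set R => (forall x, ~ X x) \/ Q X.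
have [|Pm [HP Hmax]] := @Zorn_bigcup R P.
  move=> F FP tot.
  have FI : forall X x, F X -> X x -> Q X.
    by move=> X x FX Xx; case: (FP X FX) => [h|//]; exfalso; exact: h x Xx.
  case: (classic (exists X x, F X /\ X x)) => [[X0 [x0 [FX0 X0x0]]] | none];
    last by left => x [X FX Xx]; apply: none; exists X, x.
  have [[I0 _ _] [AX0 _]] := FI _ _ FX0 X0x0.
  right; split; [split|split].
  - by exists X0.
  - move=> a b [X FX Xa] [Y FY Yb].
    case: (tot X Y FX FY) => [XY|YX].
      have [[_ D _] _] := FI _ _ FY Yb; exists Y => //; apply: D => //; exact: XY.
    have [[_ D _] _] := FI _ _ FX Xa; exists X => //; apply: D => //; exact: YX.
  - move=> r a [X FX Xa]; have [[_ _ Mu] _] := FI _ _ FX Xa.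
    by exists X => //; apply: Mu.
  - by move=> r /AX0 H; exists X0.
  - move=> n [X FX Xj]; have [_ [_ H]] := FI _ _ FX Xj; exact: H n Xj.
have QA0 : Q A0 by split.
have [Pm0|QPm] := HP.
  exfalso; apply: (Hmax A0); last by right.
  split; first by move=> x /Pm0.
  have [I0 _ _] := IA0; by move=> H; apply: (Pm0 0); apply: H.
have [[I0 ID IM] [AP nP]] := QPm.
have IN : forall a, Pm a -> Pm (- a) by move=> a pa; rewrite -mulN1r; apply: (IM).
exists Pm; split; last first.
  split=> // pj; apply: (nP 1%N); by rewrite expr1.
split=> //; first by move=> p1; apply: (nP 0%N); rewrite expr0.
move=> a b pab; apply: NNPP => /not_or_and [na nb].
have ext : forall c, ~ Pm c -> exists n y z, Pm y /\ j ^+ n = y + z * c.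
  move=> c nc; pose B := fun x => exists y z, Pm y /\ x = y + z * c.
  have BQ : ~ Q B.
    move=> QB; apply: (Hmax B); last by right.
    split.
      by move=> x Px; exists x, 0; rewrite mul0r addr0.
    by move=> H; apply: nc; apply: H; exists 0, 1; rewrite mul1r add0r.
  apply: NNPP => nex; apply: BQ; split; [split|split].
  - by exists 0, 0; rewrite mul0r addr0.
  - move=> x1 x2 [y1 [z1 [P1 ->]]] [y2 [z2 [P2 ->]]].
    exists (y1 + y2), (z1 + z2); split; first exact: ID.
    by rewrite mulrDl addrACA.
  - move=> r x1 [y1 [z1 [P1 ->]]]; exists (r * y1), (r * z1); split; first exact: (IM).
    by rewrite mulrDr mulrA.
  - by move=> r /AP Pr; exists r, 0; rewrite mul0r addr0.
  - by move=> n [y [z [Py E]]]; apply: nex; exists n, y, z.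
have [n [y1 [z1 [P1 E1]]]] := ext a na.
have [k [y2 [z2 [P2 E2]]]] := ext b nb.
apply: (nP (n + k)%N); rewrite exprD E1 E2.
have -> : (y1 + z1 * a) * (y2 + z2 * b) =
   y1 * (y2 + z2 * b) + (z1 * a * y2 + (z1 * z2) * (a * b)).
  by rewrite [in LHS]mulrDl [in RHS]mulrDr; congr (_ + _); rewrite mulrDr mulrA;
     congr (_ + _); rewrite !mulrA [z1 * a * z2]mulrAC.
have IMr : forall r c, Pm c -> Pm (c * r) by move=> r c Pc; rewrite mulrC; apply: (IM).
apply: (ID); first exact: IMr.
apply: (ID); first exact: (IM _ _ P2).
exact: (IM).
Qed.

Lemma cyc_sub (R : comPzRingType) (M : lmodType R) (m : M) :
  is_submodule (fun y : M => exists r : R, y = r *: m).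
Proof.
split.
- by exists 0; rewrite scale0r.
- by move=> x y [r1 ->] [r2 ->]; exists (r1 + r2); rewrite scalerDl.
- by move=> r x [r1 ->]; exists (r * r1); rewrite scalerA.
Qed.

Lemma ann_ideal (R : comPzRingType) (M : lmodType R) : is_ideal (ann M).
Proof.
split.
- by move=> m; rewrite scale0r.
- by move=> a b Ha Hb m; rewrite scalerDl Ha Hb addr0.
- by move=> r a Ha m; rewrite -scalerA Ha scaler0.
Qed.

Lemma rad_sum (R : comPzRingType) (M : lmodType R) (y : M) :
  ideal_mul (rad_ann M) y -> sum_aGamma y.
Proof.
move=> [s [Hs ->]]; exists [seq (q.1, q.1 *: q.2) | q <- s]; split; last by rewrite big_map.
move=> q' /mapP [q /Hs [n Hn] ->] /=; split; first by exists n.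
exists q.2; split => //; exists n.+1; split => //.
by rewrite exprS -scalerA Hn scaler0.
Qed.

Theorem mainTheorem16 (R : comPzRingType) (M : lmodType R) :
  fin_gen M -> multiplication_module M ->
  forall x : M, sum_aGamma x <-> beta x.
Proof.
move=> fg mm x; split.
  move=> [s [Hs ->]] N [[N0 ND NZ] _ Npr].
  elim: s Hs => [|q s IH] Hs; first by rewrite big_nil.
  rewrite big_cons; apply: (ND); last first.
    by apply: IH => q' Hq'; apply: Hs; rewrite in_cons Hq' orbT.
  have [[n An] [m [_ ->]]] := Hs q (mem_head _ _).
  have step : forall k m', N (q.1 ^+ k.+1 *: m') -> N (q.1 *: m').
    elim=> [|k IHk] m' H; first by rewrite expr1 in H.
    rewrite exprS -scalerA in H.
    by case: (Npr _ _ H) => [|h]; [exact: IHk | exact: h].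
  by apply: (step n); rewrite exprSr -scalerA An.
move=> bx; apply: rad_sum; apply: NNPP => nx.
have [J [IJ HJ]] := mm _ (cyc_sub x).
have [j [Jj nj]] : exists j, J j /\ ~ rad_ann M j.
  apply: NNPP => H; apply: nx; apply: (ideal_mul_mono (I := J)).
    by move=> a Ja; apply: NNPP => na; apply: H; exists a; split.
  by apply/HJ; exists 1; rewrite scale1r.
have [p [pr [pA npj]]] :=
  exists_prime (ann_ideal M) (j := j) (fun n h => nj (ex_intro _ n h)).
have [Ip _ ppr] := pr.
have [S0 SD SZ] := @ideal_mul_sub R M p Ip.
have npx : ~ ideal_mul p x.
  move=> px; apply: npj; apply: (keyL fg pr pA) => m.
  have : exists r, j *: m = r *: x by apply/HJ; exact: ideal_mul1.
  by move=> [r ->]; apply: SZ.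
apply: (npx); apply: bx; split.
- exact: ideal_mul_sub Ip.
- by exists x.
move=> r m Hrm; case: (classic (p r)) => prr.
  by right => m'; exact: ideal_mul1.
left; have [Jm [IJm HJm]] := mm _ (cyc_sub m).
apply: (ideal_mul_mono (I := Jm)); last by apply/HJm; exists 1; rewrite scale1r.
move=> b Jb.
have : p (r * b).
  apply: (keyL fg pr pA) => m'.
  have : exists c, b *: m' = c *: m by apply/HJm; exact: ideal_mul1.
  move=> [c Hc]; rewrite -scalerA Hc scalerA mulrC -scalerA.
  exact: SZ.
by case/ppr.
Qed.
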